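(* Let $\ell,m,n$ be positive integers with $\ell<n$, $m<n$, $\gcd(m,n)=1$, and let $\mathcal{X},\mathcal{Y},\hat{\mathcal{X}},\hat{\mathcal{Y}},\check{\mathcal{X}},\check{\mathcal{Y}}$ be the words defined in the context from $\mathcal{F}[\ell,m,n]$. Then $$\mathcal{X}\check{\mathcal{X}}=\hat{\mathcal{X}}\mathcal{X}^{\overline0},\qquad \mathcal{Y}\hat{\mathcal{X}}=\check{\mathcal{X}}\mathcal{Y}^{\overline0},\qquad \hat{\mathcal{Y}}\mathcal{X}=\mathcal{X}^{\overline0}\check{\mathcal{Y}},\qquad \check{\mathcal{Y}}\mathcal{Y}=\mathcal{Y}^{\overline0}\hat{\mathcal{Y}}.$$
   Context: For positive integers $\ell<n$, $m<n$, $\gcd(m,n)=1$, $\mathcal{S}=\mathcal{F}[\ell,m,n]$ is the $n$-periodic sequence with $\mathcal{S}_i=L$ if $im\bmod n<\ell$ and $R$ otherwise; indices are taken mod $n$; $d\in\{1,\dots,n-1\}$ is the inverse of $m$ mod $n$. Words are finite strings over $\{L,R\}$ indexed from $0$; juxtaposition is concatenation; $\mathcal{W}^{\overline0}$ is $\mathcal{W}$ with its index-$0$ symbol changed. For an integer $p$ and $q\ge1$, $\mathcal{S}[p;q]=\mathcal{S}_p\cdots\mathcal{S}_{p+q-1}$. Define $\mathcal{X}=\mathcal{S}[0;\ell d\bmod n]$, $\mathcal{Y}=\mathcal{S}_{\ell d\bmod n}\cdots\mathcal{S}_{n-1}$, $\hat{\mathcal{X}}=\mathcal{S}_0\cdots\mathcal{S}_{n-d-1}$,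 $\hat{\mathcal{Y}}=\mathcal{S}_{n-d}\cdots\mathcal{S}_{n-1}$, $\check{\mathcal{X}}=\mathcal{S}[\ell d;n-d]$ (cyclically from index $\ell d\bmod n$ to $((\ell-1)d-1)\bmod n$), $\check{\mathcal{Y}}=\mathcal{S}[(\ell-1)d;d]$ (cyclically from index $(\ell-1)d\bmod n$ to $(\ell d-1)\bmod n$). *)

(* Defs.v *)
From mathcomp Require Import all_boot.
Set Implicit Arguments. Unset Strict Implicit. Unset Printing Implicit Defensive.

(* Words over {L,R}: encoded as seq bool, with true = L and false = R. *)

Definition Fseq (l m n : nat) (i : nat) : bool := (i * m %% n < l).

Definition subw (l m n p q : nat) : seq bool :=
  mkseq (fun k => Fseq l m n ((p + k) %% n)) q.

Definition flip0 (w : seq bool) : seq bool :=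
  match w with [::] => [::] | b :: t => ~~ b :: t end.

Definition is_inv_mod (m n d : nat) : Prop := 1 <= d <= n.-1 /\ d * m %% n = 1 %% n.

Definition wX (l m n d : nat) := subw l m n 0 ((l * d) %% n).
Definition wY (l m n d : nat) := subw l m n ((l * d) %% n) (n - (l * d) %% n).
Definition wXh (l m n d : nat) := subw l m n 0 (n - d).
Definition wYh (l m n d : nat) := subw l m n (n - d) d.
Definition wXc (l m n d : nat) := subw l m n ((l * d) %% n) (n - d).
Definition wYc (l m n d : nat) := subw l m n (((l - 1) * d) %% n) d.

(* Main.v *)
Require Import Defs.
From mathcomp Require Import all_boot zify.

Lemma Fseq_mod l m n i j : i = j %[mod n] -> Fseq l m n i = Fseq l m n j.
Proof. by move=> h; rewrite /Fseq -modnMml h modnMml. Qed.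

Lemma rmod m n i j : i = j %[mod n] -> i * m %% n = j * m %% n.
Proof. by move=> h; rewrite -modnMml h modnMml. Qed.

Lemma subw_cat l m n p q1 q2 :
  subw l m n p q1 ++ subw l m n (p + q1) q2 = subw l m n p (q1 + q2).
Proof.
rewrite /subw /mkseq iotaD map_cat; congr (_ ++ _).
rewrite add0n.
have -> : iota q1 q2 = map (addn q1) (iota 0 q2) by rewrite -iotaDl addn0.
rewrite -map_comp; apply: eq_map => k /=; by rewrite addnA.
Qed.

Lemma subw_cat' l m n p p2 q1 q2 : p2 = p + q1 ->
  subw l m n p q1 ++ subw l m n p2 q2 = subw l m n p (q1 + q2).
Proof. by move=> ->; apply: subw_cat. Qed.

Lemma subw_mod l m n p p' q : p = p' %[mod n] -> subw l m n p q = subw l m n p' q.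
Proof.
move=> h; rewrite /subw /mkseq; apply: eq_map => k; apply: Fseq_mod.
by rewrite -modnDml h modnDml.
Qed.

Lemma shift l m n d i : 0 < l -> l < n -> d * m %% n = 1 ->
  Fseq l m n (i + d) = Fseq l m n i (+) (((i + d) * m %% n == l) || ((i + d) * m %% n == 0)).
Proof.
move=> l0 ln hd.
have n0 : 0 < n by lia.
have e : (i + d) * m %% n = (i * m %% n + 1) %% n by rewrite mulnDl -modnDm hd.
rewrite /Fseq e.
have rl := ltn_pmod (i * m) n0.
case: (eqVneq (i * m %% n) n.-1) => [->|ne].
  rewrite (_ : n.-1 + 1 = n); last by lia.
  rewrite modnn l0 orbT addbT.
  have -> : (n.-1 < l) = false by lia. by [].
rewrite modn_small; last by lia.
case: (eqVneq (i * m %% n) l.-1) => [->|ne2].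
  rewrite (_ : l.-1 + 1 = l); last by lia.
  rewrite eqxx /= ltnn; have -> : (l.-1 < l) = true by lia. by [].
have -> : (i * m %% n + 1 == l) = false by lia.
have -> : (i * m %% n + 1 == 0) = false by lia.
rewrite orbF addbF; apply/idP/idP; lia.
Qed.

Lemma inv_r m n d i : d * m %% n = 1 -> i %% n = (i * m %% n) * d %% n.
Proof.
move=> hd; rewrite modnMml -mulnA [m * d]mulnC -modnMmr hd.
by case: n hd => [|[|n]] //= hd; rewrite ?muln1 // modn_mod.
Qed.

Lemma FseqM l m n i : Fseq l m n (i %% n) = Fseq l m n i.
Proof. by apply: Fseq_mod; rewrite modn_mod. Qed.

Lemma flipC l m n d p p' q : 0 < l -> l < n -> d * m %% n = 1 ->
  p' + d = p %[mod n] -> 0 < q ->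
  (forall j, j < q -> (((p + j) * m %% n == l) || ((p + j) * m %% n == 0)) = (j == 0)) ->
  subw l m n p' q = flip0 (subw l m n p q).
Proof.
move=> l0 ln hd hp q0 hc.
case: q q0 hc => // q _ hc.
rewrite /subw /mkseq /= -/(mkseq _ _); congr (_ :: _).
  rewrite !addn0 !FseqM.
  have hs := shift l m n d (p') l0 ln hd.
  rewrite (Fseq_mod _ _ _ _ _ hp) (rmod _ _ _ _ hp) -[p]addn0 (hc 0 (ltn0Sn _)) in hs.
  by rewrite addn0 in hs; rewrite hs addbT negbK.
apply/eq_in_map => k; rewrite mem_iota => /andP [k1 k2].
rewrite !FseqM.
have hs := shift l m n d (p' + k) l0 ln hd.
have hp2 : p' + k + d = p + k %[mod n].
  by rewrite addnAC -modnDml hp modnDml.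
rewrite (Fseq_mod _ _ _ _ _ hp2) (rmod _ _ _ _ hp2) (hc k) ?addbF in hs; last by lia.
have e0 : (k == 0) = false by lia.
by rewrite e0 addbF in hs; rewrite hs.
Qed.

Lemma cond1 l m n d j : 0 < l -> l < n -> d * m %% n = 1 -> j < l * d %% n ->
  ((0 + j) * m %% n == l) || ((0 + j) * m %% n == 0) = (j == 0).
Proof.
move=> l0 ln hd hj; rewrite add0n.
have n0 : 0 < n by lia.
have ha := ltn_pmod (l * d) n0.
have hi := inv_r m n d j hd.
rewrite modn_small in hi; last by lia.
case: (eqVneq j 0) => [->|jn]; first by rewrite mul0n mod0n eqxx orbT.
apply/negbTE; apply/negP => /orP [/eqP h|/eqP h]; rewrite h in hi.
  lia.
rewrite mul0n mod0n in hi; lia.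
Qed.

Lemma ra l m n d : l < n -> d * m %% n = 1 -> (l * d %% n) * m %% n = l.
Proof.
move=> ln hd; rewrite modnMml -mulnA -modnMmr hd muln1 modn_small //.
Qed.

Lemma cond2 l m n d j : 0 < l -> l < n -> d * m %% n = 1 -> j < n - l * d %% n ->
  ((l * d %% n + j) * m %% n == l) || ((l * d %% n + j) * m %% n == 0) = (j == 0).
Proof.
move=> l0 ln hd hj.
have n0 : 0 < n by lia.
have ha := ltn_pmod (l * d) n0.
have hr := ra l m n d ln hd.
have a0 : 0 < l * d %% n.
  case: (posnP (l * d %% n)) => // h; rewrite h mul0n mod0n in hr; lia.
set a := l * d %% n in hj ha hr a0 *.
have hi := inv_r m n d (a + j) hd.
rewrite modn_small in hi; last by lia.
case: (eqVneq j 0) => [->|jn]; first by rewrite addn0 hr eqxx.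
apply/negbTE; apply/negP => /orP [/eqP h|/eqP h]; rewrite h in hi.
  rewrite /a in hi; lia.
rewrite mul0n mod0n in hi; lia.
Qed.

Theorem proposition3p4 (l m n d : nat) :
  0 < l -> 0 < m -> l < n -> m < n -> coprime m n ->
  is_inv_mod m n d ->
  [/\ wX l m n d ++ wXc l m n d = wXh l m n d ++ flip0 (wX l m n d),
      wY l m n d ++ wXh l m n d = wXc l m n d ++ flip0 (wY l m n d),
      wYh l m n d ++ wX l m n d = flip0 (wX l m n d) ++ wYc l m n d &
      wYc l m n d ++ wY l m n d = flip0 (wY l m n d) ++ wYh l m n d].
Proof.
move=> l0 m0 ln mn cop [/andP [d1 d2] hd].
have n0 : 0 < n by lia.
rewrite [1 %% n]modn_small in hd; last by lia.
have ha := ltn_pmod (l * d) n0.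
have hr := ra l m n d ln hd.
have a0 : 0 < l * d %% n.
  case: (posnP (l * d %% n)) => // h; rewrite h mul0n mod0n in hr; lia.
rewrite /wX /wY /wXh /wYh /wXc /wYc.
have c1 := fun j => cond1 l m n d j l0 ln hd.
have c2 := fun j => cond2 l m n d j l0 ln hd.
set a := l * d %% n in ha hr a0 c1 c2 *.
set b := (l - 1) * d %% n.
have hb : b + d = a %[mod n].
  rewrite /b /a modnDml modn_mod; congr (_ %% _).
  rewrite addnC -mulSn; congr (_ * _); lia.
split.
{ rewrite (subw_cat' l m n 0 a a); last by rewrite add0n.
  rewrite (addnC a) -subw_cat; congr (_ ++ _).
  apply: (flipC l m n d 0 (0 + (n - d)) a l0 ln hd).
  - rewrite add0n subnK; last by lia.
    by rewrite modnn mod0n.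
  - exact: a0.
  - exact: c1. }
{ rewrite (subw_mod l m n 0 (a + (n - a))); last first.
    rewrite subnKC; last by lia.
    by rewrite modnn mod0n.
  rewrite subw_cat (addnC (n - a)) -subw_cat; congr (_ ++ _).
  apply: (flipC l m n d a (a + (n - d)) (n - a) l0 ln hd).
  - rewrite -addnA subnK; last by lia.
    exact: modnDr.
  - lia.
  - exact: c2. }
{ rewrite {1}(subw_mod l m n 0 (n - d + d)); last first.
    rewrite subnK; last by lia.
    by rewrite modnn mod0n.
  rewrite subw_cat (addnC d) -subw_cat; congr (_ ++ _).
    apply: (flipC l m n d 0 (n - d) a l0 ln hd).
    - rewrite subnK; last by lia.
      by rewrite modnn mod0n.
    - exact: a0.
    - exact: c1.
  apply: subw_mod; apply/eqP; rewrite -(eqn_modDr d) -addnAC subnK; last by lia.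
  rewrite modnDl eq_sym; apply/eqP; exact: hb. }
{ rewrite {1}(subw_mod l m n a (b + d)); last by rewrite hb.
  rewrite subw_cat (addnC d) -subw_cat; congr (_ ++ _).
    apply: (flipC l m n d a b (n - a) l0 ln hd).
    - exact: hb.
    - lia.
    - exact: c2.
  apply: subw_mod; apply/eqP; rewrite -(eqn_modDr d) subnK; last by lia.
  rewrite addnAC -modnDml hb modnDml subnKC; last by lia.
  by []. }
Qed.
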